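(* Let $Q$ be a quiver, $\theta\in\mathbb{Z}^{Q_0}$, and $\mathbf{l},\mathbf{u}\in\mathbb{Z}_{\ge0}^{Q_1}$. Then there exist a quiver $Q'$ with no oriented cycles and a weight $\theta'\in\mathbb{Z}^{Q'_0}$ such that the flow polytope $\nabla(Q,\theta,\mathbf{l},\mathbf{u})$ and the quiver polytope $\nabla(Q',\theta')$ are integral-affinely equivalent.
   Context: A quiver $Q$: vertices $Q_0$, arrows $Q_1$, $a$ from $a^-$ to $a^+$. The flow polytope is $\nabla(Q,\theta,\mathbf{l},\mathbf{u})=\{x\in\mathbb{R}^{Q_1}\mid \mathbf{l}\le x\le\mathbf{u},\ \forall v\in Q_0:\ \theta(v)=\sum_{a^+=v}x(a)-\sum_{a^-=v}x(a)\}$ and $\nabla(Q',\theta')=\{x\in\mathbb{R}^{Q'_1}\mid 0\le x,\ \forall v\in Q'_0:\ \theta'(v)=\sum_{a^+=v}x(a)-\sum_{a^-=v}x(a)\}$. Lattice polyhedra $\nabla_i\subset V_i$ with lattices $M_i\subset V_i$ (here $\mathbb{Z}^{Q_1}$ and $\mathbb{Z}^{Q'_1}$) are integral-affinely equivalent if there is an affine linear isomorphism $\varphi:\mathrm{AffSpan}(\nabla_1)\to\mathrm{AffSpan}(\nabla_2)$ mapping $\mathrm{AffSpan}(\nabla_1)\cap M_1$ onto $\mathrm{AffSpan}(\nabla_2)\cap M_2$ and $\nabla_1$ onto $\nabla_2$. *)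

(* Defs.v *)
From HB Require Import structures.
From mathcomp Require Import all_boot all_order all_algebra.
From mathcomp Require Import reals.
Set Implicit Arguments. Unset Strict Implicit. Unset Printing Implicit Defensive.
Import Order.TTheory GRing.Theory Num.Theory.
Local Open Scope ring_scope.

(* A finite quiver: vertices 'I_nv, arrows 'I_na, arrow a goes from
   qsrc a (= a^-) to qtgt a (= a^+). *)
Record quiver := Quiver {
  nv : nat;
  na : nat;
  qsrc : 'I_na -> 'I_nv;
  qtgt : 'I_na -> 'I_nv }.

Definition no_oriented_cycle (Q : quiver) : Prop :=
  forall c : seq 'I_(na Q), c != [::] ->
    ~~ cycle (fun a b => qtgt a == qsrc b) c.

Definition flow_cond (R : realType) (Q : quiver) (theta : 'I_(nv Q) -> int)
    (x : 'I_(na Q) -> R) : Prop :=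
  forall v : 'I_(nv Q),
    (theta v)%:~R = \sum_(a | qtgt a == v) x a - \sum_(a | qsrc a == v) x a.

Definition flow_polytope (R : realType) (Q : quiver) (theta : 'I_(nv Q) -> int)
    (l u : 'I_(na Q) -> nat) (x : 'I_(na Q) -> R) : Prop :=
  (forall a, (l a)%:R <= x a <= (u a)%:R) /\ flow_cond theta x.

Definition quiver_polytope (R : realType) (Q : quiver) (theta : 'I_(nv Q) -> int)
    (x : 'I_(na Q) -> R) : Prop :=
  (forall a, 0 <= x a) /\ flow_cond theta x.

Definition aff_span (R : realType) (n : nat) (S : ('I_n -> R) -> Prop)
    (x : 'I_n -> R) : Prop :=
  exists (k : nat) (p : 'I_k -> 'I_n -> R) (c : 'I_k -> R),
    (forall i, S (p i)) /\ \sum_(i < k) c i = 1 /\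
    forall j, x j = \sum_(i < k) c i * p i j.

Definition lattice_pt (R : realType) (n : nat) (x : 'I_n -> R) : Prop :=
  forall j, x j \is a Num.int.

Definition affine_map (R : realType) (n m : nat) (M : 'I_m -> 'I_n -> R)
    (b : 'I_m -> R) (x : 'I_n -> R) : 'I_m -> R :=
  fun j => \sum_(i < n) M j i * x i + b j.

Definition maps_onto (X Y : Type) (f : X -> Y) (A : X -> Prop) (B : Y -> Prop) :=
  forall y, B y <-> exists2 x, A x & f x = y.

(* Integral-affine equivalence of lattice polyhedra P1 in R^n1 (lattice Z^n1)
   and P2 in R^n2 (lattice Z^n2): an affine-linear isomorphism
   AffSpan(P1) -> AffSpan(P2) (every affine map on an affine subspace is the
   restriction of a global affine map x |-> M x + b) that maps
   AffSpan(P1) cap Z^n1 onto AffSpan(P2) cap Z^n2, and P1 onto P2. *)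
Definition int_aff_equiv (R : realType) (n1 n2 : nat)
    (P1 : ('I_n1 -> R) -> Prop) (P2 : ('I_n2 -> R) -> Prop) : Prop :=
  exists (M : 'I_n2 -> 'I_n1 -> R) (b : 'I_n2 -> R),
    let phi := affine_map M b in
    (forall x y, aff_span P1 x -> aff_span P1 y -> phi x = phi y -> x = y) /\
    maps_onto phi (aff_span P1) (aff_span P2) /\
    maps_onto phi (fun x => aff_span P1 x /\ lattice_pt x)
                  (fun y => aff_span P2 y /\ lattice_pt y) /\
    maps_onto phi P1 P2.

(* Main.v *)
Require Import Defs.
From HB Require Import structures.
From mathcomp Require Import all_boot all_order all_algebra.
From mathcomp Require Import reals.
From mathcomp Require Import ring lra.
From Stdlib Require Import FunctionalExtensionality.
Import Order.TTheory GRing.Theory Num.Theory.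
Local Open Scope ring_scope.

Section Gen.
Variable R : realType.

Lemma affine_comb n m (M : 'I_m -> 'I_n -> R) b k (p : 'I_k -> 'I_n -> R) c :
  \sum_(i < k) c i = 1 ->
  affine_map M b (fun j => \sum_(i < k) c i * p i j) =
  (fun j => \sum_(i < k) c i * affine_map M b (p i) j).
Proof.
move=> hc; apply: functional_extensionality => j; rewrite /affine_map.
under [RHS]eq_bigr => i _ do rewrite mulrDr mulr_sumr.
rewrite big_split /= -mulr_suml hc mul1r; congr (_ + _).
rewrite exchange_big /=; apply: eq_bigr => i _.
rewrite mulr_sumr; apply: eq_bigr => i' _; ring.
Qed.

Lemma gen_equiv n1 n2 (P1 : ('I_n1 -> R) -> Prop) (P2 : ('I_n2 -> R) -> Prop)
  (M : 'I_n2 -> 'I_n1 -> R) b (psi : ('I_n2 -> R) -> ('I_n1 -> R)) :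
  (forall k (p : 'I_k -> 'I_n2 -> R) c, \sum_(i < k) c i = 1 ->
     psi (fun j => \sum_(i < k) c i * p i j) =
     (fun j => \sum_(i < k) c i * psi (p i) j)) ->
  (forall x, psi (affine_map M b x) = x) ->
  (forall y, P2 y -> P1 (psi y) /\ affine_map M b (psi y) = y) ->
  (forall x, P1 x -> P2 (affine_map M b x)) ->
  (forall x, lattice_pt x -> lattice_pt (affine_map M b x)) ->
  (forall y, lattice_pt y -> lattice_pt (psi y)) ->
  int_aff_equiv P1 P2.
Proof.
move=> psiC psiK h2 h1 lat1 lat2.
have fwd : forall x, aff_span P1 x -> aff_span P2 (affine_map M b x).
  move=> x [k [p [c [Hp [Hc Hx]]]]].
  have -> : x = (fun j => \sum_(i < k) c i * p i j) by apply: functional_extensionality.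
  rewrite affine_comb //; exists k, (fun i => affine_map M b (p i)), c; split=> //.
  by move=> i; apply: h1.
have bwd : forall y, aff_span P2 y -> aff_span P1 (psi y) /\ affine_map M b (psi y) = y.
  move=> y [k [p [c [Hp [Hc Hy]]]]].
  have -> : y = (fun j => \sum_(i < k) c i * p i j) by apply: functional_extensionality.
  rewrite psiC //; split.
    by exists k, (fun i => psi (p i)), c; split=> // i; case: (h2 _ (Hp i)).
  rewrite affine_comb //; apply: functional_extensionality => j.
  by apply: eq_bigr => i _; case: (h2 _ (Hp i)) => _ ->.
exists M, b => /=; split; last split; last split.
- by move=> x y _ _ e; rewrite -(psiK x) -(psiK y) e.
- move=> y; split; first by move=> /bwd [? ?]; exists (psi y).
  by move=> [x hx <-]; apply: fwd.
- move=> y; split; first by move=> [/bwd [? ?] /lat2 ?]; exists (psi y).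
  by move=> [x [hx lx] <-]; split; [apply: fwd | apply: lat1].
- move=> y; split; first by move=> /h2 [? ?]; exists (psi y).
  by move=> [x hx <-]; apply: h1.
Qed.
End Gen.

Section Conc.
Variables (R : realType) (Q : quiver) (theta : 'I_(nv Q) -> int)
    (l u : 'I_(na Q) -> nat).
Local Notation n := (nv Q).
Local Notation m := (na Q).

Definition arr_of (k : 'I_(m + m)) : 'I_m :=
  match split k with inl a => a | inr a => a end.

Definition Qb : quiver :=
  Quiver (fun k : 'I_(m + m) => match split k with
            inl a => lshift m (qsrc a) | inr a => lshift m (qtgt a) end)
         (fun k => rshift n (arr_of k)).

Definition thetab (v : 'I_(n + m)) : int :=
  match split v with
  | inl v => theta v + (\sum_(a | qsrc a == v) l a)%N%:Z
                     - (\sum_(a | qtgt a == v) u a)%N%:Z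
  | inr a => (u a)%:Z - (l a)%:Z
  end.

Lemma splitL (k : 'I_m) : split (lshift m k) = inl k.
Proof. exact: (unsplitK (inl _ k)). Qed.
Lemma splitR (k : 'I_m) : split (rshift m k) = inr k.
Proof. exact: (unsplitK (inr _ k)). Qed.
Lemma splitLv (k : 'I_n) : split (lshift m k) = inl k.
Proof. exact: (unsplitK (inl _ k)). Qed.
Lemma splitRv (k : 'I_m) : split (rshift n k) = inr k.
Proof. exact: (unsplitK (inr _ k)). Qed.

Lemma noc : no_oriented_cycle Qb.
Proof.
move=> [|a c] // _; rewrite /cycle /=.
case: c => [|b c] /=; case: split => ?; by rewrite eq_sym eq_lrshift.
Qed.

Definition Mphi (k : 'I_(m + m)) (i : 'I_m) : R :=
  match split k with inl a => (a == i)%:R | inr a => - (a == i)%:R end.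
Definition bphi (k : 'I_(m + m)) : R :=
  match split k with inl a => - (l a)%:R | inr a => (u a)%:R end.
Definition psi (y : 'I_(m + m) -> R) (a : 'I_m) : R := y (lshift m a) + (l a)%:R.

Lemma delta_sum (x : 'I_m -> R) a : \sum_(i < m) (a == i)%:R * x i = x a.
Proof.
rewrite (bigD1 a) //= eqxx mul1r big1 ?addr0 // => i /negbTE.
by rewrite eq_sym => ->; rewrite mul0r.
Qed.

Lemma phiL x a : affine_map Mphi bphi x (lshift m a) = x a - (l a)%:R.
Proof. by rewrite /affine_map /Mphi /bphi splitL delta_sum. Qed.
Lemma phiR x a : affine_map Mphi bphi x (rshift m a) = (u a)%:R - x a.
Proof.
rewrite /affine_map /Mphi /bphi splitR.
under eq_bigr => i _ do rewrite mulNr.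
by rewrite sumrN delta_sum addrC.
Qed.

Lemma inR (y : 'I_(m + m) -> R) a :
  \sum_(k | qtgt (q:=Qb) k == rshift n a) y k = y (lshift m a) + y (rshift m a).
Proof.
rewrite big_split_ord /= /arr_of.
under eq_bigl => k do rewrite splitL eq_rshift.
under [X in _ + X]eq_bigl => k do rewrite splitR eq_rshift.
by rewrite !big_pred1_eq.
Qed.
Lemma outR (y : 'I_(m + m) -> R) a :
  \sum_(k | qsrc (q:=Qb) k == rshift n a) y k = 0.
Proof. by rewrite big1 // => k; rewrite /=; case: split => b; rewrite eq_lrshift. Qed.
Lemma inL (y : 'I_(m + m) -> R) v :
  \sum_(k | qtgt (q:=Qb) k == lshift m v) y k = 0.
Proof. by rewrite big1 // => k; rewrite /= eq_rlshift. Qed.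
Lemma outL (y : 'I_(m + m) -> R) v :
  \sum_(k | qsrc (q:=Qb) k == lshift m v) y k =
  \sum_(a | qsrc a == v) y (lshift m a) + \sum_(a | qtgt a == v) y (rshift m a).
Proof.
rewrite big_split_ord /=.
under eq_bigl => k do rewrite splitL eq_lshift.
by under [X in _ + X]eq_bigl => k do rewrite splitR eq_lshift.
Qed.

Lemma castn (k : nat) : ((k%:Z)%:~R : R) = k%:R.
Proof. by []. Qed.

Lemma flowK x : @flow_cond R Qb thetab (affine_map Mphi bphi x) <-> flow_cond theta x.
Proof.
split=> H v.
- have := H (lshift m v); rewrite /thetab splitLv inL outL.
  rewrite (eq_bigr _ (fun a _ => phiL x a)) (eq_bigr _ (fun a _ => phiR x a)).
  rewrite !intrB !intrD !castn !natr_sum !sumrB.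
  move=> e; lra.
- rewrite -(splitK v); case: (split v) => [w|a] /=.
  + rewrite /thetab splitLv inL outL.
    rewrite (eq_bigr _ (fun a _ => phiL x a)) (eq_bigr _ (fun a _ => phiR x a)).
    rewrite !intrB !intrD !castn !natr_sum !sumrB.
    have := H w; lra.
  + rewrite /thetab splitRv inR outR phiL phiR intrB !castn; lra.
Qed.

Lemma yeq (y : 'I_(m + m) -> R) : @flow_cond R Qb thetab y ->
  forall a, y (rshift m a) = (u a)%:R - (l a)%:R - y (lshift m a).
Proof.
move=> Hf a; have := Hf (rshift n a).
rewrite /thetab splitRv inR outR intrB !castn; lra.
Qed.

Lemma main_equiv : int_aff_equiv (flow_polytope theta l u) (@quiver_polytope R Qb thetab).
Proof.
apply: (@gen_equiv R _ _ _ _ Mphi bphi psi).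
- move=> k p c hc; apply: functional_extensionality => a; rewrite /psi.
  under [RHS]eq_bigr => i _ do rewrite mulrDr.
  by rewrite big_split /= -mulr_suml hc mul1r.
- move=> x; apply: functional_extensionality => a; rewrite /psi phiL; ring.
- move=> y [Hnn Hf].
  have E : affine_map Mphi bphi (psi y) = y.
    apply: functional_extensionality => k; rewrite -(splitK k).
    case: (split k) => [a|a] /=.
    + rewrite phiL /psi; ring.
    + rewrite phiR /psi yeq //; ring.
  split=> //; split.
  + move=> a; have := Hnn (lshift m a); have := Hnn (rshift m a).
    rewrite yeq // /psi => h1 h2; apply/andP; split; lra.
  + by rewrite -flowK E.
- move=> x [Hb Hf]; split; last by rewrite flowK.
  move=> k; rewrite -(splitK k); case: (split k) => [a|a] /=;
    have /andP [h1 h2] := Hb a.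
  + rewrite phiL; lra.
  + rewrite phiR; lra.
- move=> x Hx k; rewrite -(splitK k); case: (split k) => [a|a] /=.
  + by rewrite phiL rpredB // natr_int.
  + by rewrite phiR rpredB // natr_int.
- by move=> y Hy a; rewrite /psi rpredD // natr_int.
Qed.
End Conc.

Theorem proposition2p2 (R : realType) (Q : quiver) (theta : 'I_(nv Q) -> int)
    (l u : 'I_(na Q) -> nat) :
  exists (Q' : quiver) (theta' : 'I_(nv Q') -> int),
    no_oriented_cycle Q' /\
    int_aff_equiv (flow_polytope theta l u) (quiver_polytope (R := R) theta').
Proof.
exists (Qb Q), (thetab Q theta l u); split; first exact: noc.
exact: main_equiv.
Qed.
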